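(* Let $p_1,\ldots,p_m\in[0,1]$ and $\alpha\in[0,1]$, and let $q_\alpha$, $\hat\pi_\alpha$, $B_q$ be as in the context. For any $q\in[0,1]$ we have $\alpha\, q_\alpha(B_q)\le \hat\pi_\alpha q$, with equality if and only if $\hat\pi_\alpha q=0$ (equivalently $h_\alpha q=0$).
   Context: Setting: $m$ hypotheses with $p$-values $p_1,\ldots,p_m\in[0,1]$; $r_1,\ldots,r_m$ a permutation of $1,\ldots,m$ with $p_{r_1}\le\cdots\le p_{r_m}$, $p_{(i)}=p_{r_i}$, $L_i=\{r_1,\ldots,r_i\}$, $K_i=\{r_{m-i+1},\ldots,r_m\}$. For $I\subseteq\{1,\ldots,m\}$, $p_{(i:I)}$ is the $i$-th smallest of $\{p_j:j\in I\}$. Simes local test: $I\in\mathcal{U}_\alpha$ iff some $1\le i\le|I|$ has $|I|p_{(i:I)}\le i\alpha$. Closed testing: $\mathcal{X}_\alpha=\{I: J\in\mathcal{U}_\alpha\ \forall J\supseteq I\}$. $t_\alpha(S)=\max\{|I|:I\subseteq S, I\notin\mathcal{X}_\alpha\}$, and $q_\alpha(S)=t_\alpha(S)/|S|$ for $S\neq\emptyset$, $q_\alpha(\emptyset)=0$. $h_\alpha=\max\{0\le i\le m:K_i\notin\mathcal{U}_\alpha\}$, $\hat\pi_\alpha=h_\alpha/m$. For $q\in[0,1]$: $b_q=\max\{1\le i\le m: mp_{(i)}\le iq\}$ ($b_q=0$ if none), $B_q=L_{b_q}$ (the Benjamini–Hochberg rejection set at level $q$). *)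

(* Defs.v *)
(* Indices 1..m of the paper are 'I_m (0-based). *)
From HB Require Import structures.
From mathcomp Require Import all_boot all_order all_algebra all_fingroup.
Set Implicit Arguments. Unset Strict Implicit. Unset Printing Implicit Defensive.
Import Order.TTheory GRing.Theory Num.Theory.
Local Open Scope ring_scope.

Section Defs.
Variables (R : realFieldType) (m : nat) (p : 'I_m -> R) (r : {perm 'I_m}).

(* r lists the hypotheses by increasing p-value: p_(k+1) = p (r k) *)
Definition sorted_perm : Prop := forall i j : 'I_m, (i <= j)%N -> p (r i) <= p (r j).

Definition Lset (i : nat) : {set 'I_m} := [set r k | k : 'I_m & (k < i)%N].
Definition Kset (i : nat) : {set 'I_m} := [set r k | k : 'I_m & (m - i <= k)%N].

Definition psorted (I : {set 'I_m}) : seq R := sort <=%R [seq p j | j <- enum I].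
Definition pI (I : {set 'I_m}) (i : nat) : R := nth 0 (psorted I) i.-1.

Definition inU (alpha : R) (I : {set 'I_m}) : bool :=
  [exists i : 'I_#|I|, #|I|%:R * pI I i.+1 <= i.+1%:R * alpha].

Definition inX (alpha : R) (I : {set 'I_m}) : bool :=
  [forall J : {set 'I_m}, (I \subset J) ==> inU alpha J].

Definition t_alpha (alpha : R) (S : {set 'I_m}) : nat :=
  \max_(I : {set 'I_m} | (I \subset S) && ~~ inX alpha I) #|I|.

Definition q_alpha (alpha : R) (S : {set 'I_m}) : R :=
  if S == set0 then 0 else (t_alpha alpha S)%:R / #|S|%:R.

Definition h_alpha (alpha : R) : nat :=
  \max_(i < m.+1 | ~~ inU alpha (Kset i)) (i : nat).

Definition pihat (alpha : R) : R := (h_alpha alpha)%:R / m%:R.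

Definition b_q (q : R) : nat :=
  \max_(k : 'I_m | m%:R * p (r k) <= k.+1%:R * q) k.+1.

Definition B_q (q : R) : {set 'I_m} := Lset (b_q q).
End Defs.

(* Main.v *)
Require Import Defs.
From HB Require Import structures.
From mathcomp Require Import all_boot all_order all_algebra all_fingroup.
From mathcomp Require Import zify ring lra.
Import Order.TTheory GRing.Theory Num.Theory.
Local Open Scope ring_scope.
Section S.
Variable R : realFieldType.

Lemma nth_sort_gt (s : seq R) k (c : R) : (k < size s)%N ->
  (c < nth 0 (sort <=%R s) k) = (count (fun x : R => (x <= c)%R) s <= k)%N.
Proof.
move=> ks.
set t := sort <=%R s.
have st : sorted <=%R t := sort_sorted le_total s.
have ct : count (fun x => x <= c) s = count (fun x => x <= c) t.
  by apply/esym; move: (perm_sort <=%R s s); rewrite perm_refl => /seq.permP ->.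
have sz : size t = size s by rewrite size_sort.
have mono : forall i j, (i <= j)%N -> (j < size t)%N -> nth 0 t i <= nth 0 t j.
  move=> i j ij jt; apply: (sorted_leq_nth le_trans lexx) => //; rewrite inE //.
  by apply: leq_ltn_trans jt.
rewrite ct (_ : count _ t = count (fun x => (x <= c)%R) (take k t) + count (fun x => (x <= c)%R) (drop k t))%N; last by rewrite -count_cat cat_take_drop.
clearbody t.
case: (boolP (c < nth 0 t k)) => h.
- have -> : count (fun x => x <= c) (drop k t) = 0%N.
    apply/eqP; rewrite -leqn0 leqNgt -has_count; apply/hasPn => x /(nthP 0) [i ih <-].
    rewrite nth_drop -ltNge; apply: lt_le_trans h _; apply: mono.
      by apply: leq_addr.
    by rewrite size_drop ltn_subRL in ih.
  rewrite addn0; apply/esym; apply: leq_trans (count_size _ _) _.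
  by rewrite size_take; case: ifP => //; lia.
- apply/esym/negbTE; rewrite -ltnNge -count_cat cat_take_drop.
  rewrite -leNgt in h.
  apply: leq_trans (_ : (count (fun x => (x <= c)%R) (take k.+1 t) <= _)%N).
    have : all (fun x => x <= c) (take k.+1 t).
      apply/(all_nthP 0) => i; rewrite size_take => ih.
      rewrite nth_take; last by case: ifP ih => H ih; lia.
      apply: le_trans h; apply: mono; first by case: ifP ih => H ih; lia.
      by rewrite sz.
    rewrite all_count => /eqP ->; rewrite size_take; case: ifP => H; lia.
  by rewrite -{2}(cat_take_drop k.+1 t) count_cat leq_addr.
Qed.
End S.
Section S2.
Variables (R : realFieldType) (m : nat) (p : 'I_m -> R) (r : {perm 'I_m}).

Lemma aux_sub a b c : (a + b = c -> b <= c - a)%N. Proof. lia. Qed.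
Lemma aux_fin cK nK a cJ dJ mm j k :
  (cK + nK = a -> nK = mm - j -> cJ + dJ = a -> dJ <= mm - j -> cJ <= k -> k < cK -> False)%N.
Proof. lia. Qed.

Definition cnt (S : {set 'I_m}) (c : R) : nat := #|S :&: [set y | p y <= c]|.

Lemma pI_gt (S : {set 'I_m}) k (c : R) : (k < #|S|)%N -> (c < pI p S k.+1) = (cnt S c <= k)%N.
Proof.
move=> kS; rewrite /pI /= /psorted nth_sort_gt; last by rewrite size_map -cardE.
congr (_ <= _)%N; rewrite count_map /cnt cardE /enum_mem size_filter count_filter.
by apply: eq_count => x /=; rewrite !inE andbC.
Qed.

Lemma notU (S : {set 'I_m}) alpha : ~~ inU p alpha S ->
  forall k, (k < #|S|)%N -> k.+1%:R * alpha < #|S|%:R * pI p S k.+1.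
Proof. by move/existsPn => H k hk; move: (H (Ordinal hk)); rewrite -ltNge. Qed.

Lemma UK (S : {set 'I_m}) alpha : (forall k, (k < #|S|)%N -> k.+1%:R * alpha < #|S|%:R * pI p S k.+1) ->
  ~~ inU p alpha S.
Proof. by move=> H; apply/existsPn => k; rewrite -ltNge; apply: H. Qed.

Lemma card_lt n : (n <= m)%N -> #|[set k : 'I_m | (k < n)%N]| = n.
Proof.
move=> nm.
have -> : [set k : 'I_m | (k < n)%N] = [set widen_ord nm k | k : 'I_n].
  apply/setP => x; rewrite inE; apply/idP/imsetP.
    by move=> hx; exists (Ordinal hx) => //; apply: val_inj.
  by case=> k _ ->; rewrite /= ltn_ord.
rewrite card_imset ?card_ord //.
by move=> a b /(congr1 val) /= /val_inj.
Qed.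

Lemma card_ge j : (j <= m)%N -> #|[set k : 'I_m | (m - j <= k)%N]| = j.
Proof.
move=> jm; rewrite cardsCs card_ord.
have -> : ~: [set k : 'I_m | (m - j <= k)%N] = [set k : 'I_m | (k < m - j)%N].
  by apply/setP => x; rewrite !inE ltnNge.
rewrite card_lt; lia.
Qed.

Lemma cardK j : (j <= m)%N -> #|Kset r j| = j.
Proof.
move=> jm; rewrite /Kset -[RHS](card_ge _ jm) -(card_imset [set k : 'I_m | (m - j <= k)%N] (@perm_inj _ r)).
by apply: eq_card => x; apply/imsetP/imsetP => [][k hk ->]; exists k; rewrite ?inE in hk *.
Qed.

Lemma cardL j : (j <= m)%N -> #|Lset r j| = j.
Proof.
move=> jm; rewrite /Lset -[RHS](card_lt _ jm) -(card_imset [set k : 'I_m | (k < j)%N] (@perm_inj _ r)).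
by apply: eq_card => x; apply/imsetP/imsetP => [][k hk ->]; exists k; rewrite ?inE in hk *.
Qed.


Lemma K_notU alpha (J : {set 'I_m}) : sorted_perm p r -> ~~ inU p alpha J ->
  ~~ inU p alpha (Kset r #|J|).
Proof.
move=> sp nJ.
have [j jE] : {j | #|J| = j} by exists #|J|.
rewrite jE.
have jm : (j <= m)%N by rewrite -jE; have := max_card (mem J); rewrite card_ord.
have cK := cardK _ jm.
apply: UK => k; rewrite cK => kj.
have jpos : (0 : R) < j%:R by rewrite ltr0n; lia.
set c := k.+1%:R * alpha / j%:R.
have HJ := notU _ _ nJ k (eq_ind_r (fun z => (k < z)%N) kj jE).
rewrite jE in HJ.
have cJ : (cnt J c <= k)%N.
  by rewrite -pI_gt ?jE // /c ltr_pdivrMr // [_ * j%:R]mulrC.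
suff : (cnt (Kset r j) c <= k)%N.
  by rewrite -pI_gt ?cK // /c ltr_pdivrMr // [_ * j%:R]mulrC.
rewrite leqNgt; apply/negP => hK.
set K := Kset r j in hK cK *.
set A := [set y | p y <= c] in cJ hK *.
have : (0 < cnt K c)%N by lia.
rewrite /cnt -/A.
rewrite card_gt0 => /set0Pn [x]; rewrite inE => /andP [xK xA].
move: xK => /imsetP [i0]; rewrite inE => hi0 xE.
have sub : ~: K \subset A.
  apply/subsetP => y; rewrite !inE => yK.
  have yE : y = r ((r^-1)%g y) by rewrite permKV.
  have hi : ((r^-1)%g y < m - j)%N.
    rewrite ltnNge; apply/negP => hh; move/negP: yK; apply.
    by rewrite yE; apply/imsetP; exists ((r^-1)%g y); rewrite ?inE.
  rewrite yE; apply: le_trans (sp _ i0 _) _; first by apply: leq_trans (ltnW hi) hi0.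
  by move: xA; rewrite inE xE.
have e1 := cardsID K A.
have : A :\: K = ~: K by rewrite setDE; apply/setIidPr.
move=> e2; rewrite e2 in e1.
have e3 : #|~: K| = (m - j)%N.
  by have := cardsC K; rewrite card_ord cK; lia.
have e4 := cardsID J A.
have e5 : (#|A :\: J| <= m - j)%N.
  have := cardsC J; rewrite card_ord jE => e6.
  apply: leq_trans (subset_leq_card (_ : A :\: J \subset ~: J)) _.
    by rewrite setDE subsetIr.
  exact: aux_sub e6.
have e6 : cnt K c = #|A :&: K| by rewrite /cnt setIC.
have e7 : cnt J c = #|A :&: J| by rewrite /cnt setIC.
rewrite e6 in hK; rewrite e7 in cJ.
exact: aux_fin e1 e3 e4 e5 cJ hK.
Qed.

Lemma h_ge alpha (J : {set 'I_m}) : sorted_perm p r -> ~~ inU p alpha J ->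
  (#|J| <= h_alpha p r alpha)%N.
Proof.
move=> sp nJ.
have jm : (#|J| < m.+1)%N by rewrite ltnS; have := max_card (mem J); rewrite card_ord.
exact: (@leq_bigmax_cond _ (fun i : 'I_m.+1 => ~~ inU p alpha (Kset r i)) (fun i : 'I_m.+1 => nat_of_ord i) (Ordinal jm) (K_notU alpha J sp nJ)).
Qed.

End S2.
Lemma bigmax_wit (I : finType) (P : pred I) (F : I -> nat) :
  (0 < \max_(i | P i) F i)%N -> exists2 i, P i & \max_(i | P i) F i = F i.
Proof.
case: (pickP P) => [i0 Pi0 | none].
  have : (0 < #|P|)%N by apply/card_gt0P; exists i0.
  by move/(eq_bigmax_cond F) => [i Pi ->]; exists i.
by rewrite big_pred0.
Qed.

Lemma key (R : realFieldType) (m : nat) (p : 'I_m -> R) (r : {perm 'I_m})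
  (alpha q : R) :
  (forall j, 0 <= p j <= 1) ->
  sorted_perm p r ->
  0 <= alpha <= 1 ->
  0 <= q <= 1 ->
  alpha * q_alpha p alpha (B_q p r q) = 0 \/
  (0 <= alpha * q_alpha p alpha (B_q p r q) < pihat p r alpha * q).
Proof.
move=> p01 sp /andP [a0 a1] /andP [q0 q1].
rewrite /q_alpha.
case: eqP => [_|Bne]; first by left; rewrite mulr0.
rewrite /B_q in Bne *.
set b := b_q p r q in Bne *.
set B := Lset r b in Bne *.
have bm : (b <= m)%N.
  by apply/bigmax_leqP => k _; apply: ltn_ord.
have cB : #|B| = b by apply: cardL.
have bpos : (0 < b)%N.
  rewrite lt0n; apply/eqP => b0; apply: Bne; apply/eqP; rewrite -cards_eq0 cB b0 //.
have [k0 hk0 bE] := bigmax_wit _ _ _ bpos.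
rewrite -/b in bE.
set t := t_alpha p alpha B.
rewrite cB.
have [t0|tpos] := posnP t.
  by left; rewrite t0 mul0r mulr0.
right.
have [I /andP [IB nXI] tE] := bigmax_wit _ _ _ tpos.
have tI : t = #|I| by exact: tE.
move: nXI; rewrite /inX negb_forall => /existsP [J]; rewrite negb_imply => /andP [IJ nUJ].
have mpos : (0 < m)%N by lia.
have Ic : forall y, y \in I -> p y <= p (r k0).
  move=> y yI; have := subsetP IB y yI; case/imsetP => k; rewrite inE => kb ->.
  by apply: sp; rewrite -ltnS -bE.
have tJ : (t <= #|J|)%N by rewrite tI; exact: subset_leq_card IJ.
have hJ : (#|J| <= h_alpha p r alpha)%N := @h_ge R m p r alpha J sp nUJ.
have [k tk] : exists k, t = k.+1 by exists t.-1; lia.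
have HJ := @notU R m p J alpha nUJ k (ltac:(lia)).
have pJ : pI p J k.+1 <= p (r k0).
  rewrite leNgt (@pI_gt R m p J k (p (r k0)) ltac:(lia)) -ltnNge -tk tI.
  apply: subset_leq_card; apply/subsetP => y yI; rewrite !inE (subsetP IJ y yI) /=.
  exact: Ic.
have c0 : 0 <= p (r k0) by case/andP: (p01 (r k0)).
have bE2 : b = k0.+1 by exact: bE.
rewrite /pihat tk bE2.
set Jn := #|J|%:R in HJ.
set T := k.+1%:R in HJ *.
set H := (h_alpha p r alpha)%:R.
set M := m%:R in hk0 *. set Bn := k0.+1%:R in hk0 *. set c := p (r k0) in hk0 pJ c0.
have Mp : 0 < M by rewrite ltr0n.
have Bp : 0 < Bn by rewrite ltr0n.
have Jp : 0 <= Jn by rewrite ler0n.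
have Hp : 0 <= H by rewrite ler0n.
have s1 : T * alpha < Jn * c by apply: lt_le_trans HJ (ler_wpM2l Jp pJ).
have s2 : Jn * c <= H * c by apply: (ler_wpM2r c0); rewrite /Jn /H ler_nat.
have s3 : T * alpha * M < H * c * M by rewrite ltr_pM2r //; apply: lt_le_trans s1 s2.
have s4 : H * (M * c) <= H * (Bn * q) by exact: (ler_wpM2l Hp hk0).
have Tp : 0 < T by rewrite ltr0n.
apply/andP; split.
  by apply: mulr_ge0 => //; apply: divr_ge0; lra.
rewrite mulrA ltr_pdivrMr //.
have -> : H / M * q * Bn = (H * q * Bn) / M by ring.
rewrite ltr_pdivlMr //.
nra.
Qed.

Theorem lemma5 (R : realFieldType) (m : nat) (p : 'I_m -> R) (r : {perm 'I_m})
  (alpha q : R) :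
  (forall j, 0 <= p j <= 1) ->
  sorted_perm p r ->
  0 <= alpha <= 1 ->
  0 <= q <= 1 ->
  alpha * q_alpha p alpha (B_q p r q) <= pihat p r alpha * q /\
  (alpha * q_alpha p alpha (B_q p r q) = pihat p r alpha * q <-> pihat p r alpha * q = 0) /\
  (pihat p r alpha * q = 0 <-> (h_alpha p r alpha)%:R * q = 0).
Proof.
move=> p01 sp a01 q01.
have K := @key R m p r alpha q p01 sp a01 q01.
have hm : (h_alpha p r alpha <= m)%N.
  by apply/bigmax_leqP => i _; rewrite -ltnS ltn_ord.
have R0 : 0 <= pihat p r alpha * q.
  case/andP: q01 => q0 _; apply: mulr_ge0 => //.
  by rewrite /pihat divr_ge0 // ler0n.
split; last split.
- by case: K => [->|/andP [_ /ltW]].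
- case: K => [->|/andP [L0 Lt]]; first by split => <-.
  split => E; first by rewrite E lt_irreflexive in Lt.
  by rewrite E in Lt; move: (le_lt_trans L0 Lt); rewrite lt_irreflexive.
- rewrite /pihat mulrAC.
  have [m0|mpos] := posnP m.
    have h0 : h_alpha p r alpha = 0%N by lia.
    by rewrite h0 !mul0r.
  split; last by move=> ->; rewrite mul0r.
  by move/eqP; rewrite mulf_eq0 invr_eq0 pnatr_eq0 (negbTE (lt0n_neq0 mpos)) orbF => /eqP.
Qed.
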